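(* Let $\vec G$ be an orientation of the Coxeter diagram $s_1-\cdots-s_{n-1}$ of $S_n$, with up and down indices determined as described below. Then the Cambrian lattice $\mathcal C(\vec G)$ is isomorphic to the subposet of the weak order on $S_n$ consisting of the permutations that avoid both $\bar{2}31$ and $31\underline{2}$.
   Context: Weak order on $S_n$: $x\le y$ iff $I(x)\subseteq I(y)$, $I(x)=\{(x_j,x_i):i<j,x_i>x_j\}$; $s_i=(i,i+1)$. $\Theta(\vec G)$ is the smallest lattice congruence of the weak order with $t\equiv ts$ for every directed edge $s\to t$; $\mathcal C(\vec G)$ is the quotient lattice. Up/down indices: for $b\in[2,n-1]$, $b$ is up if $s_b\to s_{b-1}$ in $\vec G$ and down if $s_{b-1}\to s_b$; the indices $1$ and $n$ are declared up or down arbitrarily. A permutation $x=x_1\cdots x_n$ contains $\bar{2}31$ if there are $i<j<k$ with $x_k<x_i<x_j$ and $x_i$ up; it contains $31\underline{2}$ if there are $i<j<k$ with $x_j<x_k<x_i$ and $x_k$ down; otherwise it avoids the pattern. *)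

(* Defs.v *)
From mathcomp Require Import all_boot all_fingroup.
Set Implicit Arguments. Unset Strict Implicit. Unset Printing Implicit Defensive.

(* Conventions: S_n is {perm 'I_n}; positions and values are 0-based, so the
   paper's value/position k (1-based) is the ordinal with val k-1.
   The one-line notation of x is x_1 ... x_n with x_i = x (i-1). *)

Section Weak.
Variable n : nat.
Local Notation Sn := {perm 'I_n}.

Definition inv_set (x : Sn) : {set 'I_n * 'I_n} :=
  [set ij : 'I_n * 'I_n | [exists i : 'I_n, exists j : 'I_n,
    [&& i < j, x j < x i & ij == (x j, x i)]]].

Definition weak_le (x y : Sn) : bool := inv_set x \subset inv_set y.

Definition is_join (x y z : Sn) : Prop :=
  [/\ weak_le x z, weak_le y z & forall w, weak_le x w -> weak_le y w -> weak_le z w].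
Definition is_meet (x y z : Sn) : Prop :=
  [/\ weak_le z x, weak_le z y & forall w, weak_le w x -> weak_le w y -> weak_le w z].

Definition lattice_congruence (R : Sn -> Sn -> Prop) : Prop :=
  [/\ (forall x, R x x), (forall x y, R x y -> R y x),
      (forall x y z, R x y -> R y z -> R x z),
      (forall x x' y z z', R x x' -> is_join x y z -> is_join x' y z' -> R z z')
    & (forall x x' y z z', R x x' -> is_meet x y z -> is_meet x' y z' -> R z z')].

(* [up : nat -> bool] encodes the orientation and the up/down indices
   (1-based): for b in [2, n-1], up b = true means s_b -> s_(b-1) (b is up)
   and up b = false means s_(b-1) -> s_b (b is down); up 1 and up n are the
   arbitrary declarations for the indices 1 and n. *)

(* generating pairs (t, ts) for directed edges s -> t of the oriented path.
   The simple transposition s_k (1-based k) is tperm of the 0-based values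
   k-1, k.  Here b is the 0-based value b'-1 of the middle index b' in
   [2,n-1], so s_(b'-1) = tperm a b and s_b' = tperm b c.  Function
   composition t s is written explicitly (mathcomp's s * t is t o s). *)
Definition cambrian_gen (up : nat -> bool) (u v : Sn) : Prop :=
  exists a b c : 'I_n, [/\ val b = (val a).+1, val c = (val b).+1 &
    let sl := tperm a b in let sr := tperm b c in
    if up (val b).+1
    then (* s_b' -> s_(b'-1): s = sr, t = sl *) u = sl /\ v = (sr * sl)%g
    else (* s_(b'-1) -> s_b': s = sl, t = sr *) u = sr /\ v = (sl * sr)%g].

Definition Theta (up : nat -> bool) (x y : Sn) : Prop :=
  forall R, lattice_congruence R ->
    (forall u v, cambrian_gen up u v -> R u v) -> R x y.

(* order of the quotient lattice C(G), on representatives: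
   [x] <= [y] iff x' <= y' for some x' in [x], y' in [y] *)
Definition cambrian_le (up : nat -> bool) (x y : Sn) : Prop :=
  exists x' y', [/\ Theta up x x', Theta up y y' & weak_le x' y'].

(* pattern avoidance; the value x_i (0-based val v) is up iff up (v+1) *)
Definition contains_bar231 (up : nat -> bool) (x : Sn) : bool :=
  [exists i : 'I_n, exists j : 'I_n, exists k : 'I_n,
    [&& i < j, j < k, x k < x i, x i < x j & up (val (x i)).+1]].
Definition contains_312_under (up : nat -> bool) (x : Sn) : bool :=
  [exists i : 'I_n, exists j : 'I_n, exists k : 'I_n,
    [&& i < j, j < k, x j < x k, x k < x i & ~~ up (val (x k)).+1]].
Definition avoids_cambrian (up : nat -> bool) (x : Sn) : bool :=
  ~~ contains_bar231 up x && ~~ contains_312_under up x.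

End Weak.

(* Main.v *)
Require Import Defs.
From mathcomp Require Import all_boot all_fingroup.
From mathcomp Require Import zify.
From Stdlib Require Import FunctionalExtensionality.
Set Implicit Arguments. Unset Strict Implicit. Unset Printing Implicit Defensive.

Ltac substords := repeat match goal with
 | H : is_true (nat_of_ord ?u == nat_of_ord ?v) |- _ =>
     move/eqP/val_inj: H => H; first [subst u | subst v]
 end.
Ltac splitifs := repeat (case: ifP => /= ?); substords.


Section Basics.
Variable n : nat.
Local Notation Sn := {perm 'I_n}.
Implicit Types x y : Sn.
Implicit Types u v w : 'I_n.

Definition pos x (v : 'I_n) : nat := (x^-1)%g v.
Definition ivs x (u v : 'I_n) : bool := (u, v) \in inv_set x.

Lemma invE x u v : ivs x u v = (u < v) && (pos x v < pos x u).
Proof.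
rewrite /ivs /inv_set inE /pos; apply/existsP/idP.
- case=> i /existsP [j /and3P [lij lt /eqP E]]; case: E => -> ->.
  by rewrite !permK lt lij.
- case/andP => luv lp; exists ((x^-1)%g v); apply/existsP; exists ((x^-1)%g u).
  by rewrite !permKV lp luv eqxx.
Qed.

Lemma pos_lt x u : pos x u < n.
Proof. exact: ltn_ord. Qed.

Lemma pos_inj x u v : pos x u = pos x v -> u = v.
Proof. by move/val_inj/perm_inj. Qed.

Lemma pos_neq x u v : (nat_of_ord u == nat_of_ord v) = false -> (pos x u == pos x v) = false.
Proof. by move=> H; apply/eqP => /pos_inj E; rewrite E eqxx in H. Qed.

Lemma inv_trans x u v w : ivs x u v -> ivs x v w -> ivs x u w.
Proof. rewrite !invE; lia. Qed.

Lemma inv_cotrans x u v w : u < v -> v < w -> ivs x u w -> ivs x u v || ivs x v w.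
Proof.
move=> h1 h2; have n1 := @pos_neq x u v; have n2 := @pos_neq x v w.
have e1 : (nat_of_ord u == nat_of_ord v) = false by apply/negbTE/eqP; lia.
have e2 : (nat_of_ord v == nat_of_ord w) = false by apply/negbTE/eqP; lia.
move: (n1 e1) (n2 e2) => /eqP f1 /eqP f2; rewrite !invE; lia.
Qed.

Lemma weak_leP x y : reflect (forall u v, ivs x u v -> ivs y u v) (weak_le x y).
Proof.
apply: (iffP subsetP) => H.
- move=> u v; exact: H.
- case=> u v; exact: H.
Qed.

Lemma weak_le_refl x : weak_le x x.
Proof. exact: subxx. Qed.

Lemma weak_le_trans x y z : weak_le x y -> weak_le y z -> weak_le x z.
Proof. exact: subset_trans. Qed.

Lemma incr_id (h : 'I_n -> 'I_n) : (forall k l : 'I_n, k < l -> h k < h l) ->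
  forall k, h k = k.
Proof.
move=> H.
have lo : forall m (k : 'I_n), nat_of_ord k = m -> m <= h k.
  elim=> [//|m IH] k Ek.
  have lm : m < n by have := ltn_ord k; lia.
  have := IH (Ordinal lm) erefl; have := H (Ordinal lm) k; rewrite /= Ek.
  move=> /(_ (ltnSn m)); lia.
have hi : forall m (k : 'I_n), n - (nat_of_ord k).+1 = m -> h k <= k.
  elim=> [|m IH] k Ek.
    have := ltn_ord (h k); have := ltn_ord k; lia.
  have lm : (nat_of_ord k).+1 < n by have := ltn_ord k; lia.
  have := IH (Ordinal lm); rewrite /=.
  have -> : n - (nat_of_ord k).+2 = m by lia.
  move=> /(_ erefl); have := H k (Ordinal lm) (ltnSn _); rewrite /=; lia.
move=> k; apply: val_inj; apply/eqP; rewrite eqn_leq.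
by rewrite (lo _ k erefl) (hi _ k erefl).
Qed.

Lemma inv_inj x y : (forall u v, ivs x u v = ivs y u v) -> x = y.
Proof.
move=> H.
have hid := @incr_id (fun k => (y^-1)%g (x k)).
have mono : forall k l : 'I_n, k < l -> (y^-1)%g (x k) < (y^-1)%g (x l).
  move=> k l kl.
  have nkl : (nat_of_ord (x k) == nat_of_ord (x l)) = false.
    apply/negbTE/negP => /eqP/val_inj/perm_inj E; rewrite E in kl; lia.
  have /eqP := pos_neq y nkl.
  have := H (x k) (x l); have := H (x l) (x k); rewrite !invE /pos !permK.
  lia.
apply/permP => k; have := hid mono k => E.
by rewrite -{2}E permKV.
Qed.

Definition klt (k : 'I_n -> nat) (u v : 'I_n) := (k u < k v) || ((k u == k v) && (u < v)).
Definition rk k v := #|[pred u | klt k u v]|.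

Lemma klt_trans k u v w : klt k u v -> klt k v w -> klt k u w.
Proof. rewrite /klt; lia. Qed.

Lemma rk_lt k v : rk k v < n.
Proof.
rewrite /rk; have : [pred u | klt k u v] \subset predC1 v.
  apply/subsetP => u; rewrite !inE /klt; apply: contraTneq => ->; lia.
move/subset_leq_card; rewrite cardC1 card_ord => H; apply: (leq_ltn_trans H).
have := ltn_ord v; lia.
Qed.

Lemma rk_mono k u v : klt k u v -> rk k u < rk k v.
Proof.
move=> uv; apply: proper_card; apply/properP; split.
  apply/subsetP => w; rewrite !inE => wu; exact: klt_trans wu uv.
by exists u; rewrite !inE // /klt; lia.
Qed.

Lemma klt_total k u v : u != v -> klt k u v || klt k v u.
Proof.
move=> /eqP neq; have : (nat_of_ord u == nat_of_ord v) = false.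
  by apply/eqP => E; apply: neq; apply: val_inj.
rewrite /klt; lia.
Qed.

Lemma rk_inj k : injective (fun v => Ordinal (rk_lt k v)).
Proof.
move=> u v [] E; apply/eqP; apply/negPn/negP => /(klt_total k) /orP [] /rk_mono; lia.
Qed.

Definition pk k : Sn := ((perm (@rk_inj k))^-1)%g.

Lemma pos_pk k v : pos (pk k) v = rk k v.
Proof. by rewrite /pos /pk invgK permE. Qed.

Lemma inv_pk k u v : ivs (pk k) u v = (u < v) && (k v < k u).
Proof.
rewrite invE !pos_pk; apply/idP/idP.
- case/andP => uv r; rewrite uv /=.
  have nuv : u != v by apply/eqP => E; subst; lia.
  case/orP: (klt_total k nuv) => H; first by have := rk_mono H; lia.
  move: H; rewrite /klt; lia.
- case/andP => uv kk; rewrite uv /=; apply: rk_mono; rewrite /klt; lia.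
Qed.

End Basics.



Section Lat.
Variable n : nat.
Local Notation Sn := {perm 'I_n}.
Implicit Types x y z : Sn.
Implicit Types u v w a b c d : 'I_n.

Lemma join_le x y : weak_le x y -> is_join x y y.
Proof. by move=> h; split => //; exact: weak_le_refl. Qed.
Lemma join_le' x y : weak_le y x -> is_join x y x.
Proof. by move=> h; split => //; exact: weak_le_refl. Qed.
Lemma join_sym x y z : is_join x y z -> is_join y x z.
Proof. by case=> h1 h2 h3; split => // w a b; apply: h3. Qed.
Lemma meet_le x y : weak_le x y -> is_meet x y x.
Proof. by move=> h; split => //; exact: weak_le_refl. Qed.
Lemma meet_le' x y : weak_le y x -> is_meet x y y.
Proof. by move=> h; split => //; exact: weak_le_refl. Qed.
Lemma meet_sym x y z : is_meet x y z -> is_meet y x z.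
Proof. by case=> h1 h2 h3; split => // w a b; apply: h3. Qed.

Definition edge x' x a b := [/\ a < b, ivs x a b &
  forall u v, ivs x' u v = ivs x u v && ~~ ((u == a :> nat) && (v == b :> nat))].

Lemma edge_le x' x a b : edge x' x a b -> weak_le x' x.
Proof. by case=> _ _ E; apply/weak_leP => u v; rewrite E => /andP []. Qed.

Lemma edge_cons x' x a b c : edge x' x a b -> a < c -> c < b -> ivs x a c = ~~ ivs x c b.
Proof.
case=> ab iab E ac cb.
case h1: (ivs x a c); case h2: (ivs x c b) => //=.
  have h1' : ivs x' a c by rewrite E h1 /=; apply/negP => /andP [_ /eqP]; lia.
  have h2' : ivs x' c b by rewrite E h2 /=; apply/negP => /andP [/eqP]; lia.
  by have := inv_trans h1' h2'; rewrite E !eqxx /= andbF.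
by have := inv_cotrans ac cb iab; rewrite h1 h2.
Qed.

Definition sides x a b (s : 'I_n -> bool) :=
  forall c, a < c -> c < b -> ivs x c b = ~~ s c.

Lemma side_pos x' x a b s c : edge x' x a b -> sides x a b s -> a < c -> c < b ->
  (s c -> pos x c < pos x b /\ pos x c < pos x a) /\
  (~~ s c -> pos x b < pos x c /\ pos x a < pos x c).
Proof.
move=> e sd ac cb; have := edge_cons e ac cb; have := sd c ac cb.
have /eqP nb := @pos_neq _ x c b (ltn_eqF cb).
have /eqP na := @pos_neq _ x a c (ltn_eqF ac).
rewrite !invE; case: (s c) => /=; lia.
Qed.

(* the join-irreducible of an arc and its lower cover *)
Definition kJ a b (s : 'I_n -> bool) v : nat :=
  if v == b :> nat then 1 else if v == a :> nat then 2
  else if (v < a) || ((v < b) && s v) then 0 else 3.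
Definition kJs a b (s : 'I_n -> bool) v : nat :=
  if v == b :> nat then 2 else if v == a :> nat then 1
  else if (v < a) || ((v < b) && s v) then 0 else 3.

Lemma J_edge a b s : a < b -> edge (pk (kJs a b s)) (pk (kJ a b s)) a b.
Proof.
move=> ab; split => //.
  by rewrite inv_pk /kJ; splitifs; lia.
move=> u v; rewrite !inv_pk /kJ /kJs; splitifs; lia.
Qed.

Lemma J_le x' x a b s : edge x' x a b -> sides x a b s -> weak_le (pk (kJ a b s)) x.
Proof.
move=> e sd; have [ab iab _] := e.
apply/weak_leP => u v; rewrite inv_pk invE /kJ.
have Hu : a < u -> u < b -> _ := side_pos e sd.
have Hv : a < v -> v < b -> _ := side_pos e sd.
move: iab; rewrite invE => iab.
have /eqP nab := @pos_neq _ x a b (ltn_eqF ab).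
splitifs; lia.
Qed.


Section Cong.
Local Set Default Proof Using "All".
Variable R : Sn -> Sn -> Prop.
Hypothesis HR : lattice_congruence R.

Lemma Rrefl x : R x x. Proof. by case: HR. Qed.
Lemma Rsym x y : R x y -> R y x. Proof. by case: HR => _ h _ _ _; apply: h. Qed.
Lemma Rtrans x y z : R x y -> R y z -> R x z.
Proof. by case: HR => _ _ h _ _; apply: h. Qed.
Lemma Rjoin x x' y z z' : R x x' -> is_join x y z -> is_join x' y z' -> R z z'.
Proof. by case: HR => _ _ _ h _; apply: h. Qed.
Lemma Rmeet x x' y z z' : R x x' -> is_meet x y z -> is_meet x' y z' -> R z z'.
Proof. by case: HR => _ _ _ _ h; apply: h. Qed.

Definition arcR a b s := forall y' y, edge y' y a b -> sides y a b s -> R y' y.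

Lemma transport x' x a b s : edge x' x a b -> sides x a b s -> R x' x -> arcR a b s.
Proof.
move=> e sd Rx y' y e' sd'.
have [ab _ Ex] := e; have [_ _ Ey] := e'.
have eJ := J_edge s ab; have [_ iJ EJ] := eJ.
have Jx := J_le e sd; have Jy := J_le e' sd'.
have Jsx : weak_le (pk (kJs a b s)) x'.
  apply/weak_leP => u v; rewrite EJ Ex => /andP [h1 ->]; rewrite andbT.
  by move/weak_leP: Jx; apply.
have Jsy : weak_le (pk (kJs a b s)) y'.
  apply/weak_leP => u v; rewrite EJ Ey => /andP [h1 ->]; rewrite andbT.
  by move/weak_leP: Jy; apply.
have RJ : R (pk (kJs a b s)) (pk (kJ a b s)).
  apply: (Rmeet Rx (y := pk (kJ a b s))).
  - split => //; first exact: edge_le eJ.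
    move=> w h1 h2; apply/weak_leP => u v hw; rewrite EJ.
    apply/andP; split; first by move/weak_leP: h2; apply.
    by move/weak_leP: h1 => /(_ u v hw); rewrite Ex => /andP [].
  - exact: meet_le' Jx.
apply: (Rjoin RJ (y := y')).
- exact: join_le Jsy.
- split => //; first exact: edge_le e'.
  move=> w h1 h2; apply/weak_leP => u v hy.
  case E: ((u == a :> nat) && (v == b :> nat)).
    move/andP: E => [/eqP/val_inj -> /eqP/val_inj ->].
    by move/weak_leP: h1; apply.
  by move/weak_leP: h2; apply; rewrite Ey hy E.
Qed.

End Cong.

Section Hex.
Local Set Default Proof Using "All".
Variables (a d b : 'I_n) (s : 'I_n -> bool).
Hypotheses (ad : a < d) (db : d < b).

Definition kH (p1 p2 p3 : nat) v : nat :=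
  if v == a :> nat then p1 else if v == d :> nat then p2 else if v == b :> nat then p3
  else if (v < a) || ((v < b) && s v) then 0 else 4.
Definition H p1 p2 p3 := pk (kH p1 p2 p3).
Local Notation X0 := (H 1 2 3).
Local Notation X1 := (H 1 3 2).
Local Notation X2 := (H 2 3 1).
Local Notation Y1 := (H 2 1 3).
Local Notation Y2 := (H 3 1 2).
Local Notation Top := (H 3 2 1).

Ltac hexle := apply/weak_leP => u v; rewrite !inv_pk /kH; splitifs; lia.

Lemma X0Y1 : weak_le X0 Y1. Proof. hexle. Qed.
Lemma X1Top : weak_le X1 Top. Proof. hexle. Qed.
Lemma Y1Top : weak_le Y1 Top. Proof. hexle. Qed.
Lemma Y1Y2 : weak_le Y1 Y2. Proof. hexle. Qed.
Lemma Y2Top : weak_le Y2 Top. Proof. hexle. Qed.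
Lemma X0Y2 : weak_le X0 Y2. Proof. hexle. Qed.
Lemma X0X2 : weak_le X0 X2. Proof. hexle. Qed.
Lemma X2Top : weak_le X2 Top. Proof. hexle. Qed.
Lemma X0X1 : weak_le X0 X1. Proof. hexle. Qed.
Lemma X1X2 : weak_le X1 X2. Proof. hexle. Qed.

Lemma hjoin : is_join X1 Y1 Top.
Proof.
split; [exact: X1Top | exact: Y1Top |].
move=> w h1 h2; apply/weak_leP => u v.
have hd1 : ivs w a d by move/weak_leP: h2; apply; rewrite inv_pk /kH; splitifs; lia.
have hd2 : ivs w d b by move/weak_leP: h1; apply; rewrite inv_pk /kH; splitifs; lia.
have hab := inv_trans hd1 hd2.
move=> h; have : [|| ivs X1 u v, ivs Y1 u v | (u == a :> nat) && (v == b :> nat)].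
  by move: h; rewrite !inv_pk /kH; splitifs; lia.
case/or3P => [/(weak_leP _ _ h1) // | /(weak_leP _ _ h2) // |].
by case/andP => /eqP/val_inj -> /eqP/val_inj ->.
Qed.

Lemma hmeet : is_meet Y2 X2 X0.
Proof.
split; [exact: X0Y2 | exact: X0X2 |].
move=> w h1 h2; apply/weak_leP => u v h.
have hu1 := weak_leP _ _ h1 u v h; have hu2 := weak_leP _ _ h2 u v h.
have : ivs X0 u v || ((u == a :> nat) && (v == b :> nat)).
  by move: hu1 hu2; rewrite !inv_pk /kH; splitifs; lia.
case/orP => // /andP [/eqP/val_inj E1 /eqP/val_inj E2]; subst u v.
case/orP: (inv_cotrans ad db h) => [/(weak_leP _ _ h2) | /(weak_leP _ _ h1)];
  rewrite inv_pk /kH; splitifs; lia.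
Qed.

Ltac hexedge := split; [lia | rewrite inv_pk /kH; splitifs; lia |
   move=> u v; rewrite !inv_pk /kH; splitifs; lia].

Lemma eX0X1 : edge X0 X1 d b. Proof. hexedge. Qed.
Lemma eY2Top : edge Y2 Top d b. Proof. hexedge. Qed.
Lemma eX0Y1 : edge X0 Y1 a d. Proof. hexedge. Qed.
Lemma eX2Top : edge X2 Top a d. Proof. hexedge. Qed.
Lemma eY1Y2 : edge Y1 Y2 a b. Proof. hexedge. Qed.
Lemma eX1X2 : edge X1 X2 a b. Proof. hexedge. Qed.

Ltac hexsides := move=> c h1 h2; rewrite inv_pk /kH; splitifs; lia.

Lemma sX1 : sides X1 d b s. Proof. hexsides. Qed.
Lemma sTopdb : sides Top d b s. Proof. hexsides. Qed.
Lemma sY1 : sides Y1 a d s. Proof. hexsides. Qed.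
Lemma sTopad : sides Top a d s. Proof. hexsides. Qed.
Lemma sY2 : s d -> sides Y2 a b s. Proof. move=> sd; hexsides. Qed.
Lemma sX2 : ~~ s d -> sides X2 a b s. Proof. move=> sd; hexsides. Qed.

End Hex.
End Lat.



Section Force.
Variable n : nat.
Local Notation Sn := {perm 'I_n}.
Implicit Types x y z : Sn.
Implicit Types u v w a b c d : 'I_n.
Variable up : nat -> bool.
Definition upv (c : 'I_n) := up (nat_of_ord c).+1.

Lemma tpermN (x y z : 'I_n) : nat_of_ord (tperm x y z) =
  if z == x :> nat then nat_of_ord y else if z == y :> nat then nat_of_ord x else nat_of_ord z.
Proof.
case: tpermP => [->|->|nx ny]; rewrite ?eqxx //.
  by case: ifP => // /eqP/val_inj ->.
have -> : (z == x :> nat) = false by apply/eqP => /val_inj.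
by have -> : (z == y :> nat) = false by apply/eqP => /val_inj.
Qed.

Lemma ord_neq (u v : 'I_n) : u <> v -> nat_of_ord u <> nat_of_ord v.
Proof. by move=> h /val_inj. Qed.

Lemma pos_t1 a m w : pos (tperm a m) w =
  if w == a :> nat then nat_of_ord m else if w == m :> nat then nat_of_ord a else nat_of_ord w.
Proof. by rewrite /pos tpermV tpermN. Qed.

Lemma pos_t2 (p q r t w : 'I_n) : pos (tperm p q * tperm r t)%g w =
  nat_of_ord (tperm p q (tperm r t w)).
Proof. by rewrite /pos invMg !tpermV permM. Qed.

Section Gen.
Variables a m b : 'I_n.
Hypotheses (am : nat_of_ord m = a.+1) (mb : nat_of_ord b = m.+1).

Lemma gen_up : edge (tperm a m) (tperm m b * tperm a m)%g a b /\
   ivs (tperm m b * tperm a m)%g m b = false.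
Proof.
have P2 : forall w, pos (tperm m b * tperm a m)%g w =
   if w == a :> nat then nat_of_ord b else if w == m :> nat then nat_of_ord a
   else if w == b :> nat then nat_of_ord m else nat_of_ord w.
  move=> w; rewrite pos_t2; case: (tpermP a m w) => [->|->|/ord_neq ? /ord_neq ?];
    rewrite tpermN; splitifs; lia.
split; last by rewrite invE !P2; splitifs; lia.
split; first lia.
  by rewrite invE !P2; splitifs; lia.
move=> u v; rewrite !invE P2 P2 !pos_t1; splitifs; lia.
Qed.

Lemma gen_down : edge (tperm m b) (tperm a m * tperm m b)%g a b /\
   ivs (tperm a m * tperm m b)%g m b = true.
Proof.
have P2 : forall w, pos (tperm a m * tperm m b)%g w =
   if w == a :> nat then nat_of_ord m else if w == m :> nat then nat_of_ord b
   else if w == b :> nat then nat_of_ord a else nat_of_ord w.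
  move=> w; rewrite pos_t2; case: (tpermP m b w) => [->|->|/ord_neq ? /ord_neq ?];
    rewrite !tpermN; splitifs; lia.
split; last by rewrite invE !P2; splitifs; lia.
split; first lia.
  by rewrite invE !P2; splitifs; lia.
move=> u v; rewrite !invE P2 P2 !pos_t1; splitifs; lia.
Qed.
End Gen.


Lemma force R (HR : lattice_congruence R)
  (Hg : forall p q : Sn, cambrian_gen up p q -> R p q) a b s :
  (exists c, [/\ a < c, c < b & upv c = s c]) -> arcR R a b s.
Proof.
move=> [c [ac cb uc]].
move: {2}(b - a) (leqnn (b - a)) => k hk.
elim: k a b hk c ac cb uc => [|k IH] a b hk c ac cb uc; first lia.
case: (ltnP a.+1 c) => hc.
- have dn : a.+1 < n by have := ltn_ord c; lia.
  pose d := Ordinal dn.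
  have ad : a < d by rewrite /=.
  have db : d < b by rewrite /=; lia.
  have IHd : arcR R d b s.
    by apply: (IH d b _ c) => //=; lia.
  case sd: (s d).
  + have R01 := IHd _ _ (eX0X1 s ad db) (sX1 s ad db).
    have R1T := Rjoin HR R01 (join_le (X0Y1 s ad db)) (hjoin s ad db).
    have R12 := Rmeet HR R1T (meet_le (Y1Y2 s ad db)) (meet_le' (Y2Top s ad db)).
    exact: (transport HR (eY1Y2 s ad db) (sY2 ad db sd) R12).
  + have R2T := IHd _ _ (eY2Top s ad db) (sTopdb s ad db).
    have R02 := Rmeet HR R2T (hmeet s ad db) (meet_le' (X2Top s ad db)).
    have R01 := Rmeet HR R02 (meet_le (X0X1 s ad db)) (meet_le' (X1X2 s ad db)).
    have R12 := Rtrans HR (Rsym HR R01) R02.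
    exact: (transport HR (eX1X2 s ad db) (sX2 ad db (negbT sd)) R12).
- case: (ltnP c.+1 b) => hb.
  + have dn : b.-1 < n by have := ltn_ord b; lia.
    pose d := Ordinal dn.
    have ad : a < d by rewrite /=; lia.
    have db : d < b by rewrite /=; lia.
    have IHd : arcR R a d s.
      by apply: (IH a d _ c) => //=; lia.
    case sd: (s d).
    * have R2T := IHd _ _ (eX2Top s ad db) (sTopad s ad db).
      have R0Y2 := Rmeet HR R2T (meet_sym (hmeet s ad db)) (meet_le' (Y2Top s ad db)).
      have R0Y1 := Rmeet HR R0Y2 (meet_le (X0Y1 s ad db)) (meet_le' (Y1Y2 s ad db)).
      have R12 := Rtrans HR (Rsym HR R0Y1) R0Y2.
      exact: (transport HR (eY1Y2 s ad db) (sY2 ad db sd) R12).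
    * have R0Y1 := IHd _ _ (eX0Y1 s ad db) (sY1 s ad db).
      have R1T := Rjoin HR R0Y1 (join_le (X0X1 s ad db)) (join_sym (hjoin s ad db)).
      have R12 := Rmeet HR R1T (meet_le (X1X2 s ad db)) (meet_le' (X2Top s ad db)).
      exact: (transport HR (eX1X2 s ad db) (sX2 ad db (negbT sd)) R12).
  + have E1 : nat_of_ord c = a.+1 by lia.
    have E2 : nat_of_ord b = c.+1 by lia.
    case sc: (s c).
    * have [e iv] := gen_up E1 E2.
      have Rg : R (tperm a c) (tperm c b * tperm a c)%g.
        apply: Hg; exists a, c, b; split => //=.
        by move: uc; rewrite /upv sc => ->.
      apply: (transport HR e _ Rg) => c' h1 h2.
      have -> : c' = c by apply: val_inj => /=; lia.
      by rewrite iv sc.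
    * have [e iv] := gen_down E1 E2.
      have Rg : R (tperm c b) (tperm a c * tperm c b)%g.
        apply: Hg; exists a, c, b; split => //=.
        by move: uc; rewrite /upv sc => ->.
      apply: (transport HR e _ Rg) => c' h1 h2.
      have -> : c' = c by apply: val_inj => /=; lia.
      by rewrite iv sc.
Qed.

End Force.



Section Fdef.
Variable n : nat.
Local Notation Sn := {perm 'I_n}.
Implicit Types x y z : Sn.
Implicit Types u v w a b c d : 'I_n.
Variable up : nat -> bool.
Local Notation upv := (upv up).

Definition cwit x a b := [exists w : 'I_n, [&& a < w, w < b &
   (upv w && ~~ ivs x w b) || (~~ upv w && ~~ ivs x a w)]].
Definition E x' x := exists a b, edge x' x a b /\ cwit x a b.

Lemma E_R R (HR : lattice_congruence R)
  (Hg : forall p q : Sn, cambrian_gen up p q -> R p q) x' x : E x' x -> R x' x.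
Proof.
case=> a [b [e /existsP [w /and3P [aw wb hw]]]].
pose s := fun c => ~~ ivs x c b.
have F : arcR R a b s.
  apply: (force HR Hg).
  exists w; split => //; rewrite /s.
  case/orP: hw => /andP [u1 u2]; first by rewrite u1 u2.
  by rewrite (negbTE u1); move: u2; rewrite (edge_cons e aw wb) negbK => ->.
apply: F e _.
by move=> c h1 h2; rewrite /s negbK.
Qed.

Definition Tm x u v := [&& ivs x u v,
  [forall c : 'I_n, ((u < c) && (c < v)) ==>
      ((~~ upv c ==> ivs x u c) && (upv c ==> ivs x c v))] &
  [forall c : 'I_n, forall d : 'I_n,
      [&& u < c, c < d, d < v, upv c & ~~ upv d] ==> ivs x c d]].

Lemma Tm_inv x u v : Tm x u v -> ivs x u v.
Proof. by case/and3P. Qed.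

Lemma Tm_mono x y u v : weak_le x y -> Tm x u v -> Tm y u v.
Proof.
move/weak_leP => le /and3P [h1 /forallP h2 /forallP h3].
apply/and3P; split; first exact: le.
- apply/forallP => c; apply/implyP => hc; have := implyP (h2 c) hc.
  case/andP => /implyP i1 /implyP i2; apply/andP; split; apply/implyP => h.
    exact: le (i1 h).
  exact: le (i2 h).
- apply/forallP => c; apply/forallP => d; apply/implyP => hc.
  have := h3 c => /forallP /(_ d) /implyP /(_ hc); exact: le.
Qed.

Lemma Tm_E x' x u v : E x' x -> Tm x' u v = Tm x u v.
Proof.
move=> Exx; apply/idP/idP.
  by apply: Tm_mono; case: Exx => a [b [e _]]; exact: edge_le e.
case: Exx => a [b [[ab iab Ee] /existsP [w /and3P [aw wb hw]]]].
have Kw1 : upv w -> ~~ ivs x w b by move=> h; case/orP: hw => /andP [h1 h2] //; rewrite h in h1.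
have Kw2 : ~~ upv w -> ~~ ivs x a w by move=> h; case/orP: hw => /andP [h1 h2] //; rewrite h1 in h.
move=> /and3P [h1 /forallP h2 /forallP h3].
have H2 : forall c, u < c -> c < v -> (~~ upv c -> ivs x u c) /\ (upv c -> ivs x c v).
  move=> c uc cv; have := implyP (h2 c); rewrite uc cv => /(_ isT) /andP [/implyP ? /implyP ?].
  by split.
have H3 : forall c d, u < c -> c < d -> d < v -> upv c -> ~~ upv d -> ivs x c d.
  move=> c d uc cd dv uc' ud; have := h3 c => /forallP /(_ d) /implyP; apply.
  by rewrite uc cd dv uc' ud.
have Nab : forall p q : 'I_n, (p == a :> nat) && (q == b :> nat) -> p = a /\ q = b.
  by move=> p q /andP [/eqP e1 /eqP e2]; split; apply: val_inj.
apply/and3P; split.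
- rewrite Ee h1 /=; apply/negP => /Nab [E1 E2]; subst u v.
  have [a1 a2] := H2 w aw wb; case uw: (upv w).
    by move: (Kw1 uw); rewrite (a2 uw).
  by move: (Kw2 (negbT uw)); rewrite (a1 (negbT uw)).
- apply/forallP => c; apply/implyP => /andP [uc cv]; have [a1 a2] := H2 c uc cv.
  apply/andP; split; apply/implyP => hc; rewrite Ee.
  + rewrite (a1 hc) /=; apply/negP => /Nab [E1 E2]; subst u c.
    have wv : w < v by lia.
    case uw: (upv w).
      by move: (Kw1 uw); rewrite (H3 w b aw wb cv uw hc).
    by move: (Kw2 (negbT uw)); rewrite ((H2 w aw wv).1 (negbT uw)).
  + rewrite (a2 hc) /=; apply/negP => /Nab [E1 E2]; subst c v.
    have uw : u < w by lia.
    case uw': (upv w).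
      by move: (Kw1 uw'); rewrite ((H2 w uw wb).2 uw').
    by move: (Kw2 (negbT uw')); rewrite (H3 a w uc aw wb hc (negbT uw')).
- apply/forallP => c; apply/forallP => d; apply/implyP => /and5P [uc cd dv uc' ud].
  rewrite Ee (H3 c d uc cd dv uc' ud) /=; apply/negP => /Nab [E1 E2]; subst c d.
  have uw : u < w by lia.
  have wv : w < v by lia.
  case uw': (upv w).
    by move: (Kw1 uw'); rewrite (H3 w b uw wb dv uw' ud).
  by move: (Kw2 (negbT uw')); rewrite (H3 a w uc aw wv uc' (negbT uw')).
Qed.


Lemma pos_eq x u (i : 'I_n) : (pos x u == i :> nat) = (u == x i :> nat).
Proof.
rewrite /pos; apply/idP/idP => /eqP h; apply/eqP.
  by move/val_inj: h => <-; rewrite permKV.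
by move/val_inj: h => ->; rewrite permK.
Qed.

Lemma pos_perm x (i : 'I_n) : pos x (x i) = i.
Proof. by rewrite /pos permK. Qed.

Lemma swap_edge x (i j : 'I_n) : nat_of_ord j = i.+1 -> x j < x i ->
  edge (tperm i j * x)%g x (x j) (x i).
Proof.
move=> ji lt; split => //.
  by rewrite invE !pos_perm lt; lia.
move=> u v; rewrite !invE.
have -> : pos (tperm i j * x)%g v = tperm i j ((x^-1)%g v) by rewrite /pos invMg tpermV permM.
have -> : pos (tperm i j * x)%g u = tperm i j ((x^-1)%g u) by rewrite /pos invMg tpermV permM.
rewrite !tpermN.
have := pos_eq x u i; have := pos_eq x u j; have := pos_eq x v i; have := pos_eq x v j.
rewrite /pos => e1 e2 e3 e4.
case: (eqVneq (nat_of_ord u) (nat_of_ord v)) => [euv | nuv]; first by rewrite euv ltnn.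
have /eqP n1 := pos_neq x (negbTE nuv); rewrite /pos in n1.
splitifs; lia.
Qed.

Definition cdesc x (i j : 'I_n) := [&& j == i.+1 :> nat, x j < x i & cwit x (x j) (x i)].

Definition step x : Sn :=
  if [pick ij : 'I_n * 'I_n | cdesc x ij.1 ij.2] is Some ij then (tperm ij.1 ij.2 * x)%g else x.

Lemma step_cases x : (step x = x /\ forall i j, ~~ cdesc x i j) \/ E (step x) x.
Proof.
rewrite /step; case: pickP => [[i j] /= /and3P [/eqP ji lt cw] | none].
  by right; rewrite /E; exists (x j), (x i); split => //; exact: swap_edge.
left. split => //. move=> i j; have := none (i, j). move=> /= ->. done.
Qed.

Lemma E_card x' x : E x' x -> #|inv_set x'| < #|inv_set x|.
Proof.
case=> a [b [[ab iab Ee] _]]; apply: proper_card; apply/properP; split.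
  apply/subsetP => [[u v]]; have := Ee u v; rewrite /ivs => ->; by case/andP.
exists (a, b) => //; have := Ee a b; rewrite /ivs => ->.
by rewrite !eqxx andbF.
Qed.

Definition fproj x := iter (n * n).+1 step x.
Local Notation f := fproj.

Lemma f_fix x : step (f x) = f x.
Proof.
have H : forall k, step (iter k step x) = iter k step x \/
   #|inv_set (iter k step x)| + k <= #|inv_set x|.
  elim=> [|k IH]; first by right; rewrite addn0.
  rewrite iterS; case: (step_cases (iter k step x)) => [[hh _]|e]; first by left; rewrite !hh.
  case: IH => [h|h]; first by move: (E_card e); rewrite h; lia.
  by right; have := E_card e; lia.
case: (H (n * n).+1) => // h; exfalso.
have : #|inv_set x| <= n * n.
  by have := max_card (inv_set x); rewrite card_prod card_ord.
move: h; lia.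
Qed.

Lemma f_conn (Q : Sn -> Sn -> Prop) : (forall x, Q x x) ->
  (forall x y z, Q x y -> Q y z -> Q x z) -> (forall x' x, E x' x -> Q x x') ->
  forall x, Q x (f x).
Proof.
move=> Qr Qt QE x; rewrite /f; elim: (n * n).+1 => [|k IH] //=.
apply: Qt IH _; case: (step_cases (iter k step x)) => [[-> _]|e] //.
exact: QE.
Qed.

Lemma f_Tm x u v : Tm (f x) u v = Tm x u v.
Proof.
pose Q := fun x y : Sn => forall u v, Tm y u v = Tm x u v.
apply: (f_conn (Q := Q)) => //.
- by move=> ? ? ? h1 h2 ? ?; rewrite h2 h1.
- by move=> x' y e ? ?; rewrite (Tm_E _ _ e).
Qed.

Lemma fix_nodesc x : step x = x -> forall i j, ~~ cdesc x i j.
Proof.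
case: (step_cases x) => [[_ //]|e] h; exfalso.
by have := E_card e; rewrite h ltnn.
Qed.

End Fdef.


Lemma crossing (P : nat -> bool) j k : j <= k -> P j -> ~~ P k ->
  exists p, [/\ j <= p, p < k, P p & ~~ P p.+1].
Proof.
elim: k => [|k IH] jk pj npk.
  have j0 : j = 0 by lia.
  by subst j; rewrite pj in npk.
case: (eqVneq j k.+1) => [ej|nej]; first by subst j; rewrite pj in npk.
case pk: (P k).
  by exists k; split => //; lia.
have [p [h1 h2 h3 h4]] := IH ltac:(lia) pj (negbT pk).
by exists p; split => //; lia.
Qed.

Section Pat.
Variable n : nat.
Local Notation Sn := {perm 'I_n}.
Implicit Types x y z : Sn.
Implicit Types u v w a b c d : 'I_n.
Variable up : nat -> bool.
Local Notation upv := (upv up).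

Lemma mk231 x (i j k : 'I_n) : i < j -> j < k -> x k < x i -> x i < x j -> upv (x i) ->
  contains_bar231 up x.
Proof.
move=> *; apply/existsP; exists i; apply/existsP; exists j; apply/existsP; exists k.
by apply/and5P; split.
Qed.

Lemma mk312 x (i j k : 'I_n) : i < j -> j < k -> x j < x k -> x k < x i -> ~~ upv (x k) ->
  contains_312_under up x.
Proof.
move=> *; apply/existsP; exists i; apply/existsP; exists j; apply/existsP; exists k.
by apply/and5P; split.
Qed.

Lemma ord_neq' (u v : 'I_n) : u != v -> nat_of_ord u <> nat_of_ord v.
Proof. by move=> /eqP h /val_inj. Qed.

Lemma perm_neq x (i j : 'I_n) : nat_of_ord i <> nat_of_ord j -> nat_of_ord (x i) <> nat_of_ord (x j).
Proof. by move=> h /val_inj /perm_inj E; apply: h; rewrite E. Qed.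

Lemma nodesc_avoid x : (forall i j, ~~ cdesc up x i j) -> avoids_cambrian up x.
Proof.
move=> H; apply/andP; split; apply/negP.
- case/existsP => i /existsP [j /existsP [k /and5P [ij jk ki ij' ui]]].
  pose P p := [exists t : 'I_n, (t == p :> nat) && (x i < x t)].
  have Pj : P j by apply/existsP; exists j; rewrite eqxx ij'.
  have nPk : ~~ P k.
    apply/negP => /existsP [t /andP [/eqP /val_inj E]]; subst t; lia.
  have [p [jp pk Pp nPp]] := crossing (ltnW jk) Pj nPk.
  case/existsP: Pp => t /andP [/eqP tp xt].
  have ln : p.+1 < n by have := ltn_ord k; lia.
  pose t' := Ordinal ln.
  have xt' : x t' < x i.
    have : x t' != x i :> nat by apply/eqP; apply: perm_neq => /=; lia.
    move: nPp => /existsPn /(_ t') /=; rewrite eqxx /=; lia.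
  move: (H t t'); rewrite /cdesc /= tp eqxx /=.
  have -> : x t' < x t by lia.
  rewrite /=; apply/negP; apply/negPn; apply/existsP; exists (x i).
  have ui' : upv (x i) := ui.
  rewrite xt xt' /= ui' /= invE !pos_perm; lia.
- case/existsP => i /existsP [j /existsP [k /and5P [ij jk ki ij' ui]]].
  pose P p := [exists t : 'I_n, (t == p :> nat) && (x k < x t)].
  have Pi : P i by apply/existsP; exists i; rewrite eqxx ij'.
  have nPj : ~~ P j.
    apply/negP => /existsP [t /andP [/eqP /val_inj E]]; subst t; lia.
  have [p [jp pk Pp nPp]] := crossing (ltnW ij) Pi nPj.
  case/existsP: Pp => t /andP [/eqP tp xt].
  have ln : p.+1 < n by have := ltn_ord k; lia.
  pose t' := Ordinal ln.
  have xt' : x t' < x k.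
    have : x t' != x k :> nat by apply/eqP; apply: perm_neq => /=; lia.
    move: nPp => /existsPn /(_ t') /=; rewrite eqxx /=; lia.
  move: (H t t'); rewrite /cdesc /= tp eqxx /=.
  have -> : x t' < x t by lia.
  rewrite /=; apply/negP; apply/negPn; apply/existsP; exists (x k).
  have ui' : ~~ upv (x k) := ui.
  rewrite xt xt' /= (negbTE ui') /= invE !pos_perm /=; lia.
Qed.


Lemma posD x u v : nat_of_ord u <> nat_of_ord v -> pos x u <> pos x v.
Proof. by move=> h /pos_inj E; apply: h; rewrite E. Qed.

Lemma val231 x (c d a : 'I_n) : pos x c < pos x d -> pos x d < pos x a -> a < c -> c < d ->
  upv c -> contains_bar231 up x.
Proof.
move=> h1 h2 h3 h4 h5.
by apply: (mk231 (i := (x^-1)%g c) (j := (x^-1)%g d) (k := (x^-1)%g a)); rewrite ?permKV.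
Qed.

Lemma val312 x (b a c : 'I_n) : pos x b < pos x a -> pos x a < pos x c -> a < c -> c < b ->
  ~~ upv c -> contains_312_under up x.
Proof.
move=> h1 h2 h3 h4 h5.
by apply: (mk312 (i := (x^-1)%g b) (j := (x^-1)%g a) (k := (x^-1)%g c)); rewrite ?permKV.
Qed.

Lemma cdesc_contains x i j : cdesc up x i j -> ~~ avoids_cambrian up x.
Proof.
case/and3P => /eqP ji lt /existsP [w /and3P [aw wb hw]].
rewrite /avoids_cambrian negb_and !negbK.
have pi := pos_perm x i; have pj := pos_perm x j.
case/orP: hw => /andP [uw nw].
- apply/orP; left; move: nw; rewrite invE => nw.
  have ne := @posD x w (x i) ltac:(lia).
  apply: (val231 (c := w) (d := x i) (a := x j)) => //; lia.
- apply/orP; right; move: nw; rewrite invE => nw.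
  have ne := @posD x w (x j) ltac:(lia).
  apply: (val312 (b := x i) (a := x j) (c := w)) => //; lia.
Qed.

Lemma avoid_Tm x : avoids_cambrian up x -> forall u v, Tm up x u v = ivs x u v.
Proof.
move=> /andP [n231 n312] u v; apply/idP/idP; first exact: Tm_inv.
have N231 : forall c d a : 'I_n, pos x c < pos x d -> pos x d < pos x a -> a < c -> c < d ->
  upv c -> False.
  by move=> c d a h1 h2 h3 h4 h5; move/negP: n231; apply; apply: (val231 h1 h2).
have N312 : forall b a c : 'I_n, pos x b < pos x a -> pos x a < pos x c -> a < c -> c < b ->
  ~~ upv c -> False.
  by move=> b a c h1 h2 h3 h4 h5; move/negP: n312; apply; apply: (val312 h1 h2).
move=> h; move: (h); rewrite invE => /andP [uv pvu].
have A1 : forall c, u < c -> c < v -> ~~ upv c -> ivs x u c.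
  move=> c uc cv nc; rewrite invE uc /=; case: (ltnP (pos x c) (pos x u)) => // le.
  have := @posD x c u ltac:(lia) => ne.
  by exfalso; apply: (N312 v u c) => //; lia.
have A2 : forall c, u < c -> c < v -> upv c -> ivs x c v.
  move=> c uc cv nc; rewrite invE cv /=; case: (ltnP (pos x v) (pos x c)) => // le.
  have := @posD x c v ltac:(lia) => ne.
  by exfalso; apply: (N231 c v u) => //; lia.
apply/and3P; split => //.
- apply/forallP => c; apply/implyP => /andP [uc cv]; apply/andP; split; apply/implyP.
    exact: A1.
  exact: A2.
- apply/forallP => c; apply/forallP => d; apply/implyP => /and5P [uc cd dv uc' ud].
  have := A2 c uc ltac:(lia) uc'; have := A1 d ltac:(lia) dv ud.
  rewrite !invE cd /= => /andP [_ h1] /andP [_ h2].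
  case: (ltnP (pos x d) (pos x c)) => // le.
  have := @posD x c d ltac:(lia) => ne.
  by exfalso; apply: (N231 c d u) => //; lia.
Qed.

End Pat.


Section Fprop.
Variable n : nat.
Local Notation Sn := {perm 'I_n}.
Implicit Types x y z : Sn.
Implicit Types u v w a b c d : 'I_n.
Variable up : nat -> bool.
Local Notation upv := (upv up).
Local Notation f := (fproj up).

Lemma f_avoid x : avoids_cambrian up (f x).
Proof. exact: nodesc_avoid (fix_nodesc (f_fix up x)). Qed.

Lemma f_id y : avoids_cambrian up y -> f y = y.
Proof.
move=> av; have st : step up y = y.
  rewrite /step; case: pickP => [ij h|//].
  by move/negP: (cdesc_contains h); rewrite av.
by rewrite /fproj; elim: (n * n).+1 => //= k ->.
Qed.

Lemma f_inv x u v : ivs (f x) u v = Tm up x u v.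
Proof. by rewrite -(avoid_Tm (f_avoid x)) f_Tm. Qed.

Lemma f_le x : weak_le (f x) x.
Proof. by apply/weak_leP => u v; rewrite f_inv; exact: Tm_inv. Qed.

Lemma f_mono x y : weak_le x y -> weak_le (f x) (f y).
Proof. by move=> le; apply/weak_leP => u v; rewrite !f_inv; exact: Tm_mono. Qed.

Lemma f_idem x : f (f x) = f x.
Proof. exact: f_id (f_avoid x). Qed.

Lemma E_f x' x : E up x' x -> f x' = f x.
Proof. by move=> e; apply: (@inv_inj n) => u v; rewrite !f_inv (Tm_E _ _ e). Qed.

Definition conn x y := forall Q : Sn -> Sn -> Prop, (forall x, Q x x) ->
  (forall x y, Q x y -> Q y x) -> (forall x y z, Q x y -> Q y z -> Q x z) ->
  (forall x' x, E up x' x -> Q x' x) -> Q x y.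

Lemma conn_f x : conn x (f x).
Proof.
move=> Q r s t e; apply: (f_conn (Q := Q)) => // x' y h; exact/s/e.
Qed.

Lemma conn_eq x y : conn x y -> f x = f y.
Proof.
move=> c; apply: (c (fun x y => f x = f y)) => //.
- by move=> ? ? ? -> ->.
- exact: E_f.
Qed.

Lemma weak_le_anti x y : weak_le x y -> weak_le y x -> x = y.
Proof.
move=> /weak_leP h1 /weak_leP h2; apply: (@inv_inj n) => u v.
by apply/idP/idP; [apply: h1 | apply: h2].
Qed.

End Fprop.

Section Rho.
Variable n : nat.
Local Notation Sn := {perm 'I_n}.
Implicit Types x y z : Sn.
Implicit Types u v w a b c d : 'I_n.

Definition rv : Sn := perm (@rev_ord_inj n).
Definition rho x : Sn := (rv * x)%g.

Lemma rv_invN k : nat_of_ord ((rv^-1)%g k) = n - k.+1.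
Proof.
have := permKV rv k; rewrite {1}/rv permE => /(congr1 (@nat_of_ord n)) /=.
have := ltn_ord ((rv^-1)%g k); have := ltn_ord k; lia.
Qed.

Lemma ivs_rho x u v : ivs (rho x) u v = (u < v) && ~~ ivs x u v.
Proof.
rewrite !invE.
have -> : pos (rho x) v = n - (pos x v).+1 by rewrite /pos /rho invMg permM rv_invN.
have -> : pos (rho x) u = n - (pos x u).+1 by rewrite /pos /rho invMg permM rv_invN.
case: (ltnP u v) => //= uv.
have := @posD _ x u v ltac:(lia); have := pos_lt x u; have := pos_lt x v; lia.
Qed.

Lemma rhoK x : rho (rho x) = x.
Proof.
rewrite /rho mulgA; have -> : (rv * rv = 1)%g.
  by apply/permP => k; rewrite permM perm1 /rv !permE rev_ordK.
by rewrite mul1g.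
Qed.

Lemma rho_le x y : weak_le x y -> weak_le (rho y) (rho x).
Proof.
move/weak_leP => h; apply/weak_leP => u v; rewrite !ivs_rho => /andP [-> /=].
by apply: contra; apply: h.
Qed.

Lemma E_rho (up : nat -> bool) x' x : E up x' x -> E (fun k => ~~ up k) (rho x) (rho x').
Proof.
case=> a [b [e /existsP [w /and3P [aw wb hw]]]].
have [ab iab Ee] := e.
have cons := edge_cons e aw wb.
exists a, b; split.
- split => //.
    by rewrite ivs_rho ab Ee iab !eqxx.
  move=> u v; rewrite !ivs_rho Ee.
  case ee: ((u == a :> nat) && (v == b :> nat)); last by rewrite !andbT.
  case/andP: ee => /eqP/val_inj e1 /eqP/val_inj e2; subst u v.
  by rewrite iab !andbF.
- apply/existsP; exists w; rewrite aw wb /=.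
  rewrite !ivs_rho !Ee aw wb /=.
  have -> : (w == a :> nat) = false by lia.
  have -> : (w == b :> nat) = false by lia.
  rewrite !andbF !andbT !negbK /= /upv.
  move: hw; rewrite /upv cons.
  by case: (up _); case: (ivs x w b).
Qed.

End Rho.


Section Final.
Variable n : nat.
Local Notation Sn := {perm 'I_n}.
Implicit Types x y z : Sn.
Variable up : nat -> bool.
Local Notation up' := (fun k => ~~ up k).
Local Notation f := (fproj up).
Local Notation f' := (fproj up').

Definition g x : Sn := rho (f' (rho x)).

Lemma g_ge x : weak_le x (g x).
Proof. by rewrite -{1}(rhoK x) /g; apply: rho_le; exact: f_le. Qed.

Lemma g_mono x y : weak_le x y -> weak_le (g x) (g y).
Proof. by move=> le; apply: rho_le; apply: f_mono; apply: rho_le. Qed.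

Lemma g_idem x : g (g x) = g x.
Proof. by rewrite /g rhoK f_idem. Qed.

Lemma conn_rho (u : nat -> bool) x y : conn u x y -> conn (fun k => ~~ u k) (rho x) (rho y).
Proof.
move=> c; apply: (c (fun x y => conn (fun k => ~~ u k) (rho x) (rho y))).
- by move=> z Q r _ _ _; apply: r.
- by move=> a b h Q r s t e; exact: (s _ _ (h Q r s t e)).
- move=> a b d h1 h2 Q r s t e; exact: (t _ (rho b) _ (h1 Q r s t e) (h2 Q r s t e)).
- by move=> x' z e Q r s t e'; apply: s; apply: e'; apply: E_rho.
Qed.

Lemma fg x y : f x = f y -> g x = g y.
Proof.
have H : forall x, g x = g (f x).
  move=> z; rewrite /g; congr rho; apply: conn_eq; apply: conn_rho; exact: conn_f.
by move=> e; rewrite H e -H.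
Qed.

Lemma upK : (fun k => ~~ (fun k => ~~ up k) k) = up.
Proof. by apply: functional_extensionality => k; rewrite negbK. Qed.

Lemma gf x y : g x = g y -> f x = f y.
Proof.
have H : forall x, f x = f (g x).
  move=> z; have := conn_rho (conn_f (up := up') (rho z)); rewrite rhoK upK => c.
  exact: conn_eq c.
by move=> e; rewrite H e -H.
Qed.

Lemma K_cong : lattice_congruence (fun x y : Sn => f x = f y).
Proof.
split.
- by [].
- by move=> x y ->.
- by move=> x y z -> ->.
- move=> x x' y z z' e [h1 h2 h3] [h1' h2' h3']; apply: gf.
  have Gx := fg e.
  apply: weak_le_anti.
  + rewrite -(g_idem z'); apply: g_mono; apply: h3.
      by apply: (weak_le_trans (g_ge x)); rewrite Gx; apply: g_mono.
    exact: (weak_le_trans h2' (g_ge z')).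
  + rewrite -(g_idem z); apply: g_mono; apply: h3'.
      by apply: (weak_le_trans (g_ge x')); rewrite -Gx; apply: g_mono.
    exact: (weak_le_trans h2 (g_ge z)).
- move=> x x' y z z' e [h1 h2 h3] [h1' h2' h3'].
  apply: weak_le_anti.
  + rewrite -(f_idem up z); apply: f_mono; apply: h3'.
      by apply: (weak_le_trans _ (f_le up x')); rewrite -e; apply: f_mono.
    exact: (weak_le_trans (f_le up z) h2).
  + rewrite -(f_idem up z'); apply: f_mono; apply: h3.
      by apply: (weak_le_trans _ (f_le up x)); rewrite e; apply: f_mono.
    exact: (weak_le_trans (f_le up z') h2').
Qed.

Lemma gen_E (p q : Sn) : cambrian_gen up p q -> E up p q.
Proof.
case=> a [m [b [am0 mb0]]] /=.
have am : nat_of_ord m = a.+1 := am0.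
have mb : nat_of_ord b = m.+1 := mb0.
case um: (up m.+1) => [] [-> ->].
- have [e iv] := gen_up am mb.
  exists a, b; split => //; apply/existsP; exists m.
  rewrite /upv um iv; apply/and3P; split => //=; lia.
- have [e iv] := gen_down am mb.
  have [ab _ _] := e.
  exists a, b; split => //; apply/existsP; exists m.
  have am' : a < m by rewrite am.
  have mb' : m < b by rewrite mb.
  rewrite /upv um (edge_cons e am' mb') iv; apply/and3P; split => //=.
Qed.

Lemma Theta_f x : Theta up x (f x).
Proof.
move=> R HR Hg; apply: (conn_f (up := up) x (Q := R)).
- exact: Rrefl HR.
- exact: Rsym HR.
- exact: Rtrans HR.
- exact: E_R HR Hg.
Qed.

Lemma f_Theta x y : f x = f y <-> Theta up x y.
Proof.
split.
- move=> e R HR Hg; have h1 := Theta_f x HR Hg; have h2 := Theta_f y HR Hg.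
  rewrite e in h1; exact: (Rtrans HR h1 (Rsym HR h2)).
- move=> T; apply: (T _ K_cong) => p q h; apply: E_f; exact: gen_E.
Qed.

End Final.

Theorem theorem6p4 (n : nat) (up : nat -> bool) :
  exists f : {perm 'I_n} -> {perm 'I_n},
    [/\ (forall x, avoids_cambrian up (f x)),
        (forall y, avoids_cambrian up y -> exists x, f x = y),
        (forall x y, f x = f y <-> Theta up x y)
      & (forall x y, cambrian_le up x y <-> weak_le (f x) (f y))].
Proof.
exists (fproj up); split.
- exact: f_avoid.
- by move=> y av; exists y; exact: f_id.
- exact: f_Theta.
- move=> x y; split.
  + case=> x' [y' [tx ty le]].
    move/f_Theta: tx => ->; move/f_Theta: ty => ->; exact: f_mono.
  + move=> le; exists (fproj up x), (fproj up y); split => //.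
    * by apply/f_Theta; rewrite f_idem.
    * by apply/f_Theta; rewrite f_idem.
Qed.
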